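(* Let $p>0$, let $u$ be a weight on $\mathbb R$ satisfying the doubling property $u(2I)\le Cu(I)$ for all intervals $I$, and let $w$ be a weight on $(0,\infty)$ with $w\in\Delta_2$. Then there is a constant $C'>0$ such that for every well-separated finite family of intervals $\{I_i\}_i$ and every choice of integers $j_i\in[-50,50]$, $$\frac1{C'}W^{1/p}\Big(u\big(\textstyle\bigcup_iI_{i,j_i}\big)\Big)\le W^{1/p}\Big(u\big(\textstyle\bigcup_iI_i\big)\Big)\le C'\,W^{1/p}\Big(u\big(\textstyle\bigcup_iI_{i,j_i}\big)\Big).$$
   Context: A weight $u$ on $\mathbb R$ is locally integrable with $u>0$ a.e.; $u(E)=\int_Eu$; $2I$ is the interval with the same center as $I$ and twice the length. A weight $w$ on $(0,\infty)$ is nonnegative locally integrable, $W(t)=\int_0^tw$; $w\in\Delta_2$ means $W(2r)\le CW(r)$ for all $r>0$. For an interval $I$ and an integer $j\in[-50,50]$, $I_{j}$ denotes the interval with $|I_j|=|I|$, $I_0=I$, and for $j\ne0$, $\mathrm{dist}(I_j,I)=(|j|-1)|I|$ with $I_j$ to the left of $I$ if $j<0$ and to the right if $j>0$; thus $101I=\bigcup_{j=-50}^{50}I_j$, where $101I$ is the interval with the same center as $I$ and $101$ times the length. For a family $\{I_i\}$, $I_{i,j}$ denotes $(I_i)_j$. A finite family of intervals $\{I_i\}$ is well-separated if the intervals $101I_i$ are pairwise disjoint. *)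

(* Defs.v *)
From HB Require Import structures.
From mathcomp Require Import all_boot all_order all_algebra.
From mathcomp Require Import all_classical all_reals all_analysis.
Set Implicit Arguments. Unset Strict Implicit. Unset Printing Implicit Defensive.
Import Order.TTheory GRing.Theory Num.Theory.
Local Open Scope classical_set_scope.
Local Open Scope ring_scope.

Section Defs.
Variable R : realType.
Notation mu := (@lebesgue_measure R).

Definition itv (a b : R) : set R := `]a, b[.

Definition itv_dil (lam a b : R) : set R :=
  `](a + b) / 2 - lam * ((b - a) / 2), (a + b) / 2 + lam * ((b - a) / 2)[.

(* I_j : same length as I, translated by j |I| (so dist(I_j, I) = (|j|-1)|I|
   for j <> 0, to the left if j < 0, to the right if j > 0). *)
Definition itv_shift (j : int) (a b : R) : set R :=
  `]a + j%:~R * (b - a), b + j%:~R * (b - a)[.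

Definition umeas (u : R -> R) (E : set R) : R :=
  fine (\int[mu]_(x in E) (u x)%:E)%E.

Definition Wfun (w : R -> R) (t : R) : R :=
  let D : set R := (`]0, t[%classic) in fine (\int[mu]_(x in D) (w x)%:E)%E.

Definition weight_R (u : R -> R) : Prop :=
  (forall a b : R, mu.-integrable `[a, b] (EFin \o u)) /\
  {ae mu, forall x, 0 < u x}.

(* weight on (0,oo): nonnegative, integrable on every (0,t), so W is finite *)
Definition weight_pos (w : R -> R) : Prop :=
  (forall x, 0 < x -> 0 <= w x) /\
  (forall t : R, 0 < t -> mu.-integrable `]0, t[ (EFin \o w)).

Definition doubling (u : R -> R) : Prop :=
  exists C : R, forall a b : R, a < b ->
    umeas u (itv_dil 2 a b) <= C * umeas u (itv a b).

Definition Delta2 (w : R -> R) : Prop :=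
  exists C : R, forall r : R, 0 < r -> Wfun w (2 * r) <= C * Wfun w r.

Definition well_separated (n : nat) (a b : 'I_n -> R) : Prop :=
  (forall i, a i < b i) /\
  (forall i k : 'I_n, i != k ->
     itv_dil 101 (a i) (b i) `&` itv_dil 101 (a k) (b k) = set0).
End Defs.

(* Main.v *)
Require Import Defs.
From HB Require Import structures.
From mathcomp Require Import all_boot all_order all_algebra.
From mathcomp Require Import all_classical all_reals all_analysis.
From mathcomp Require Import measurable_realfun.
From mathcomp Require Import lra.
Import Order.TTheory GRing.Theory Num.Theory.
Local Open Scope classical_set_scope.
Local Open Scope ring_scope.

Lemma u_meas (R : realType) (u : R -> R) : weight_R u ->
  measurable_fun [set: R] (fun x : R => (u x)%:E).
Proof.
move=> [iu _].
have -> : [set: R] = \bigcup_(k : nat) `[- (k%:R), k%:R]%classic.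
  apply/seteqP; split => // x _ /=.
  exists (Num.truncn `|x|).+1 => //=.
  rewrite in_itv /= -ler_norml; apply: ltW; exact: truncnS_gt.
apply/measurable_fun_bigcup => // k.
by case/integrableP: (iu (- k%:R) k%:R).
Qed.

Definition up (R : realType) (u : R -> R) (x : R) : \bar R := (Num.max (u x) 0)%:E.
Arguments up {R}.

Lemma up_meas (R : realType) (u : R -> R) : weight_R u ->
  measurable_fun [set: R] (fun x : R => up u x).
Proof.
move=> wu; apply/measurable_EFinP.
have := measurable_maxr (f := u) (g := cst 0) (D := setT).
move=> /(_ _ (measurable_cst _)); apply.
apply/measurable_EFinP; exact: u_meas.
Qed.

Lemma up_ge0 (R : realType) (u : R -> R) x : (0 <= up u x)%E.
Proof. by rewrite lee_fin le_max lexx orbT. Qed.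

Lemma ae_imp (R : realType) (P Q : R -> Prop) : (forall x, P x -> Q x) ->
  {ae (@lebesgue_measure R), forall x, P x} -> {ae (@lebesgue_measure R), forall x, Q x}.
Proof.
move=> PQ [N [mN N0 sub]]; exists N; split => // x /= nQ; apply: sub => /= Px.
exact: (nQ (PQ _ Px)).
Qed.

Lemma intE (R : realType) (u : R -> R) (E : set R) : weight_R u ->
  measurable E -> (\int[@lebesgue_measure R]_(x in E) up u x =
                   \int[@lebesgue_measure R]_(x in E) (u x)%:E)%E.
Proof.
move=> wu mE; apply: ae_eq_integral => //.
- apply: (measurable_funS measurableT) ; [exact: subsetT| exact: up_meas wu].
- apply: (measurable_funS measurableT) ; [exact: subsetT| exact: u_meas wu].
- case: wu => _ ae; apply: ae_imp ae => x ux _ /=.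
  by rewrite /up max_l // ltW.
Qed.

Lemma umeasE (R : realType) (u : R -> R) (E : set R) : weight_R u ->
  measurable E -> umeas u E = fine (\int[@lebesgue_measure R]_(x in E) up u x).
Proof. by move=> wu mE; rewrite intE. Qed.

Lemma up_fin (R : realType) (u : R -> R) (x y : R) : weight_R u ->
  (\int[@lebesgue_measure R]_(z in `]x, y[) up u z)%E \is a fin_num.
Proof.
move=> wu; have mI : measurable (`]x, y[%classic : set R) by exact: measurable_itv.
rewrite intE //.
apply: integrable_fin_num; first exact: measurable_itv.
case: wu => iu _.
have H := integrableS _ _ _ (iu x y).
have H2 := H `]x, y[%classic (measurable_itv _) (measurable_itv _) (@subset_itv_oo_cc _ _ x y).
exact: H2.
Qed.

Lemma Phi_fin (R : realType) (u : R -> R) (S : set R) (x y : R) : weight_R u ->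
  measurable S -> S `<=` `]x, y[ ->
  (\int[@lebesgue_measure R]_(z in S) up u z)%E \is a fin_num.
Proof.
move=> wu mS Sxy.
rewrite ge0_fin_numE; last by apply: integral_ge0 => z _; exact: up_ge0.
have := up_fin _ _ x y wu; rewrite fin_numElt => /andP[_]; apply: le_lt_trans.
apply: (ge0_subset_integral (@lebesgue_measure R) mS (measurable_itv _)) => //.
- apply: (measurable_funS measurableT) ; [exact: subsetT| exact: up_meas wu].
- by move=> z _; exact: up_ge0.
Qed.

Lemma umeas_mono (R : realType) (u : R -> R) (S : set R) (x y : R) : weight_R u ->
  measurable S -> S `<=` `]x, y[ -> umeas u S <= umeas u `]x, y[.
Proof.
move=> wu mS Sxy.
rewrite !umeasE //; try exact: measurable_itv.
apply: fine_le; [exact: (Phi_fin _ _ _ _ _ wu mS Sxy)| exact: up_fin|].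
apply: (ge0_subset_integral (@lebesgue_measure R) mS (measurable_itv _)) => //.
- apply: (measurable_funS measurableT) ; [exact: subsetT| exact: up_meas wu].
- by move=> z _; exact: up_ge0.
Qed.

Lemma umeas_ge0 (R : realType) (u : R -> R) (S : set R) : weight_R u ->
  measurable S -> 0 <= umeas u S.
Proof.
move=> wu mS; rewrite umeasE //; apply: fine_ge0.
by apply: integral_ge0 => z _; exact: up_ge0.
Qed.

Lemma umeas_sum (R : realType) (u : R -> R) (n : nat) (x y : 'I_n -> R)
  (F : 'I_n -> set R) : weight_R u ->
  (forall i, F i = `]x i, y i[%classic) ->
  (forall i j, i != j -> F i `&` F j = set0) ->
  umeas u (\bigcup_i F i) = \sum_(i <- enum 'I_n) umeas u (F i).
Proof.
move=> wu Fi Fd.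
have mF : forall i, measurable (F i) by move=> i; rewrite Fi; exact: measurable_itv.
have -> : \bigcup_i F i = \big[setU/set0]_(i <- enum 'I_n) F i.
  rewrite -bigcup_seq; apply: eq_bigcupl; split => i _ //=.
  by rewrite mem_enum.
rewrite umeasE //; last exact: bigsetU_measurable.
rewrite ge0_integral_bigsetU //.
- rewrite (eq_bigr (fun i => (umeas u (F i))%:E)); last first.
    by move=> i _; rewrite umeasE // fineK // Fi; exact: up_fin.
  by rewrite sumEFin.
- exact: enum_uniq.
- move=> i j _ _ [z [Fiz Fjz]]; apply/eqP; apply: contraT => ij.
  have h := Fd i j ij; have : (F i `&` F j) z by split.
  by rewrite h.
- apply: (measurable_funS measurableT) ; [exact: subsetT| exact: up_meas wu].
- by move=> z _; exact: up_ge0.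
Qed.

Lemma Wfun_ge0 (R : realType) (w : R -> R) t : weight_pos w -> 0 <= Wfun w t.
Proof.
move=> [w0 _]; rewrite /Wfun /=; apply: fine_ge0; apply: integral_ge0 => x /=.
rewrite in_itv /= => /andP[x0 _]; rewrite lee_fin; exact: w0.
Qed.

Lemma Wfun_le0 {R : realType} (w : R -> R) t : t <= 0 -> Wfun w t = 0.
Proof.
move=> t0; rewrite /Wfun /=.
have -> : `]0, t[%classic = set0 :> set R.
  apply/seteqP; split => // x /=; rewrite in_itv /= => /andP[h1 h2]; lra.
by rewrite integral_set0.
Qed.

Lemma Wmono (R : realType) (w : R -> R) s t : weight_pos w -> s <= t ->
  Wfun w s <= Wfun w t.
Proof.
move=> wp st; have [s0|s0] := leP s 0.
  by rewrite (Wfun_le0 w _ s0); exact: Wfun_ge0.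
have t0 : 0 < t by lra.
case: wp => w0 iw; rewrite /Wfun /=.
have mS : measurable (`]0, s[%classic : set R) by exact: measurable_itv.
have mT : measurable (`]0, t[%classic : set R) by exact: measurable_itv.
apply: fine_le.
- apply: integrable_fin_num; first exact: measurable_itv.
  exact: iw.
- apply: integrable_fin_num; first exact: measurable_itv.
  exact: iw.
apply: (ge0_subset_integral (@lebesgue_measure R) mS mT).
- by case/integrableP: (iw t t0).
- by move=> x /=; rewrite in_itv /= => /andP[x0 _]; rewrite lee_fin; exact: w0.
- by move=> x /=; rewrite !in_itv /= => /andP[h1 h2]; apply/andP; split; lra.
Qed.

Lemma u_iter (R : realType) (u : R -> R) : weight_R u -> doubling u ->
  exists K : R, 1 <= K /\ forall (c h : R) (k : nat), 0 < h ->
    umeas u `]c - 2 ^+ k * h, c + 2 ^+ k * h[ <= K ^+ k * umeas u `]c - h, c + h[.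
Proof.
move=> wu [C hC]; exists (Num.max C 1); split; first by rewrite le_max lexx orbT.
move=> c h k h0; elim: k => [|k IH].
  by rewrite !expr0 !mul1r.
have hk : 0 < 2 ^+ k * h by rewrite mulr_gt0 // exprn_gt0.
have := hC (c - 2 ^+ k * h) (c + 2 ^+ k * h) ltac:(lra).
have -> : itv_dil 2 (c - 2 ^+ k * h) (c + 2 ^+ k * h) =
          `]c - 2 ^+ k.+1 * h, c + 2 ^+ k.+1 * h[%classic.
  rewrite /itv_dil exprS -mulrA; set t := 2 ^+ k * h.
  have -> : (c - t + (c + t)) / 2 - 2 * ((c + t - (c - t)) / 2) = c - 2 * t by lra.
  by have -> : (c - t + (c + t)) / 2 + 2 * ((c + t - (c - t)) / 2) = c + 2 * t by lra.
rewrite /itv => h1.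
apply: (le_trans h1); rewrite exprS -mulrA.
have m0 : 0 <= umeas u `]c - 2 ^+ k * h, c + 2 ^+ k * h[.
  apply: umeas_ge0 => //; exact: measurable_itv.
apply: (le_trans (y := Num.max C 1 * umeas u `]c - 2 ^+ k * h, c + 2 ^+ k * h[)).
  by apply: ler_wpM2r => //; rewrite le_max lexx.
by apply: ler_wpM2l => //; rewrite le_max ler01 orbT.
Qed.

Lemma jbounds (R : realType) (j : int) : (-50 <= j <= 50)%R ->
  (-50 : R) <= j%:~R /\ (j%:~R : R) <= 50.
Proof.
move=> /andP[h1 h2]; split.
  have : ((-50 : int)%:~R <= j%:~R :> R) by rewrite ler_int.
  by rewrite intrN.
have : (j%:~R <= (50 : int)%:~R :> R) by rewrite ler_int.
by [].
Qed.

Lemma dbl8 (R : realType) (u : R -> R) (K : R) : weight_R u ->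
  (forall (c h : R) (k : nat), 0 < h ->
    umeas u `]c - 2 ^+ k * h, c + 2 ^+ k * h[ <= K ^+ k * umeas u `]c - h, c + h[) ->
  forall (c h : R) (S : set R), 0 < h -> measurable S ->
  S `<=` `]c - 256 * h, c + 256 * h[ -> umeas u S <= K ^+ 8 * umeas u `]c - h, c + h[.
Proof.
move=> wu HK c h S h0 mS sub.
apply: le_trans (HK c h 8%N h0).
have -> : (2 : R) ^+ 8 = 256 by rewrite !exprS expr0; lra.
exact: umeas_mono.
Qed.

Lemma itv_oo_eq (R : realType) (a b c d : R) : a = c -> b = d ->
  `]a, b[%classic = `]c, d[%classic :> set R.
Proof. by move=> -> ->. Qed.

Lemma shift_le (R : realType) (u : R -> R) (K : R) : weight_R u ->
  (forall (c h : R) (k : nat), 0 < h ->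
    umeas u `]c - 2 ^+ k * h, c + 2 ^+ k * h[ <= K ^+ k * umeas u `]c - h, c + h[) ->
  forall (a b : R) (j : int), a < b -> (-50 <= j <= 50)%R ->
  umeas u (itv_shift j a b) <= K ^+ 8 * umeas u (itv a b) /\
  umeas u (itv a b) <= K ^+ 8 * umeas u (itv_shift j a b).
Proof.
move=> wu HK a b j ab hj.
have [hJ1 hJ2] := jbounds R j hj.
set J : R := j%:~R in hJ1 hJ2 *.
have L0 : 0 < b - a by lra.
have hP1 : -50 * (b - a) <= J * (b - a) by rewrite ler_wpM2r // ltW.
have hP2 : J * (b - a) <= 50 * (b - a) by rewrite ler_wpM2r // ltW.
set P := J * (b - a) in hP1 hP2.
have h0 : 0 < (b - a) / 2 by lra.
split.
- have -> : itv a b = `](a + b) / 2 - (b - a) / 2, (a + b) / 2 + (b - a) / 2[%classic.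
    by rewrite /itv; apply: itv_oo_eq; lra.
  apply: (dbl8 _ _ _ wu HK) => //; first exact: measurable_itv.
  move=> x /=; rewrite /itv_shift !in_itv /= -/J -/P => /andP[x1 x2].
  move: x1 x2; rewrite ?bnd_simp => x1 x2.
  by apply/andP; split; lra.
- have -> : itv_shift j a b =
      `](a + b) / 2 + P - (b - a) / 2, (a + b) / 2 + P + (b - a) / 2[%classic.
    by rewrite /itv_shift -/J -/P; apply: itv_oo_eq; lra.
  apply: (dbl8 _ _ _ wu HK) => //; first exact: measurable_itv.
  move=> x /=; rewrite /itv !in_itv /= => /andP[x1 x2].
  move: x1 x2; rewrite ?bnd_simp => x1 x2.
  by apply/andP; split; lra.
Qed.

Lemma W_iter (R : realType) (w : R -> R) : weight_pos w -> Delta2 w ->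
  exists M : R, 1 <= M /\ forall (k : nat) (t : R), 0 <= t ->
    Wfun w (2 ^+ k * t) <= M ^+ k * Wfun w t.
Proof.
move=> wp [C hC]; exists (Num.max C 1); split; first by rewrite le_max lexx orbT.
have M0 : 0 <= Num.max C 1 by rewrite le_max ler01 orbT.
move=> k t; rewrite le_eqVlt => /orP[/eqP t0|t0].
  rewrite -t0 mulr0 Wfun_le0 // mulr0 //.
elim: k => [|k IH]; first by rewrite !expr0 !mul1r.
have hk : 0 < 2 ^+ k * t by rewrite mulr_gt0 // exprn_gt0.
have := hC _ hk; rewrite exprS -mulrA => h1.
apply: (le_trans h1).
apply: (le_trans (y := Num.max C 1 * Wfun w (2 ^+ k * t))).
  by apply: ler_wpM2r; [exact: Wfun_ge0|rewrite le_max lexx].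
by rewrite exprS -mulrA; apply: ler_wpM2l.
Qed.

Lemma sub_dil (R : realType) (a b : R) (j : int) : a < b -> (-50 <= j <= 50)%R ->
  itv a b `<=` itv_dil 101 a b /\ itv_shift j a b `<=` itv_dil 101 a b.
Proof.
move=> ab hj.
have [hJ1 hJ2] := jbounds R j hj.
set J : R := j%:~R in hJ1 hJ2 *.
have L0 : 0 < b - a by lra.
have hP1 : -50 * (b - a) <= J * (b - a) by rewrite ler_wpM2r // ltW.
have hP2 : J * (b - a) <= 50 * (b - a) by rewrite ler_wpM2r // ltW.
set P := J * (b - a) in hP1 hP2.
split => x /=.
  rewrite /itv /itv_dil /= !in_itv /= => /andP[x1 x2].
  by apply/andP; split; lra.
rewrite /itv_shift /itv_dil /= !in_itv /= -/J -/P => /andP[x1 x2].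
by apply/andP; split; lra.
Qed.

Theorem lemma3p7 (R : realType) (p : R) (u w : R -> R) :
  0 < p -> weight_R u -> doubling u -> weight_pos w -> Delta2 w ->
  exists C' : R, 0 < C' /\
    forall (n : nat) (a b : 'I_n -> R) (js : 'I_n -> int),
      well_separated a b ->
      (forall i, -50 <= js i <= 50)%R ->
      let A := powR (Wfun w (umeas u (\bigcup_i itv (a i) (b i)))) (1 / p) in
      let B := powR (Wfun w (umeas u (\bigcup_i itv_shift (js i) (a i) (b i))))
                    (1 / p) in
      C'^-1 * B <= A /\ A <= C' * B.
Proof.
move=> p0 wu du wp dw.
have [K [K1 HK]] := u_iter R u wu du.
have [M [M1 HM]] := W_iter R w wp dw.
set K8 := K ^+ 8.
have K80 : 1 <= K8 by rewrite exprn_ege1.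
pose m := (Num.truncn K8).+1.
have Km : K8 <= 2 ^+ m.
  apply: ltW; apply: (lt_le_trans (truncnS_gt K8)).
  rewrite -natrX ler_nat; exact: ltnW (ltn_expl _ (isT : (1 < 2)%N)).
set MM := M ^+ m.
have MM0 : 0 < MM by rewrite exprn_gt0 //; lra.
have HW : forall s t, 0 <= s -> 0 <= t -> s <= K8 * t -> Wfun w s <= MM * Wfun w t.
  move=> s t s0 t0 st; apply: le_trans (HM m t t0).
  apply: Wmono => //; apply: (le_trans st); exact: ler_wpM2r.
exists (powR MM (1 / p)); split; first exact: powR_gt0.
move=> n a b js [ab disj] hjs A B.
set X := umeas u (\bigcup_i itv (a i) (b i)).
set Y := umeas u (\bigcup_i itv_shift (js i) (a i) (b i)).
have sX : X = \sum_(i <- enum 'I_n) umeas u (itv (a i) (b i)).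
  apply: (umeas_sum R u n a b) => // i j ij.
  apply/seteqP; split => // x [h1 h2].
  have := disj i j ij; rewrite -subset0; apply; split.
    exact: (sub_dil _ _ _ (js i) (ab i) (hjs i)).1.
  exact: (sub_dil _ _ _ (js j) (ab j) (hjs j)).1.
have sY : Y = \sum_(i <- enum 'I_n) umeas u (itv_shift (js i) (a i) (b i)).
  apply: (umeas_sum R u n (fun i => a i + (js i)%:~R * (b i - a i))
            (fun i => b i + (js i)%:~R * (b i - a i))) => // i j ij.
  apply/seteqP; split => // x [h1 h2].
  have := disj i j ij; rewrite -subset0; apply; split.
    exact: (sub_dil _ _ _ (js i) (ab i) (hjs i)).2.
  exact: (sub_dil _ _ _ (js j) (ab j) (hjs j)).2.
have X0 : 0 <= X.
  rewrite sX; apply: sumr_ge0 => i _; apply: umeas_ge0 => //; exact: measurable_itv.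
have Y0 : 0 <= Y.
  rewrite sY; apply: sumr_ge0 => i _; apply: umeas_ge0 => //; exact: measurable_itv.
have YX : Y <= K8 * X.
  rewrite sX sY mulr_sumr; apply: ler_sum => i _.
  exact: (shift_le R u K wu HK (a i) (b i) (js i) (ab i) (hjs i)).1.
have XY : X <= K8 * Y.
  rewrite sX sY mulr_sumr; apply: ler_sum => i _.
  exact: (shift_le R u K wu HK (a i) (b i) (js i) (ab i) (hjs i)).2.
have WYX := HW _ _ Y0 X0 YX.
have WXY := HW _ _ X0 Y0 XY.
have p1 : 0 <= 1 / p by rewrite divr_ge0 // ltW.
have WX0 := Wfun_ge0 R w X wp.
have WY0 := Wfun_ge0 R w Y wp.
have key : forall s t, 0 <= s -> 0 <= t -> s <= MM * t -> powR s (1 / p) <= powR MM (1 / p) * powR t (1 / p).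
  move=> s t s0 t0 st.
  rewrite -(powRM _ (ltW MM0) t0).
  apply: (ge0_ler_powR p1); rewrite ?nnegrE.
  - exact: s0.
  - exact: (mulr_ge0 (ltW MM0) t0).
  - exact: st.
split.
- rewrite ler_pdivrMl; last exact: powR_gt0.
  exact: (key _ _ WY0 WX0 WYX).
- exact: (key _ _ WX0 WY0 WXY).
Qed.
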